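(* Let $n\ge2$ and $\boldsymbol{\lambda}=(\lambda_1,\dots,\lambda_n)$ a vector of positive integers. For every minimal generator $(a_1,\dots,a_n,d)$ of $M(\boldsymbol{\lambda})$ we have $d<n$.
   Context: $M(\boldsymbol{\lambda})=\{(a_1,\dots,a_n,d)\in\mathbb{N}^{n+1}\mid a_1/\lambda_1+\cdots+a_n/\lambda_n\ge d\}$. A minimal generator of $M(\boldsymbol{\lambda})$ is a nonzero element that cannot be written as the sum of two nonzero elements of $M(\boldsymbol{\lambda})$. *)

(* Defs.v *)
From mathcomp Require Import all_boot all_order all_algebra.
Set Implicit Arguments. Unset Strict Implicit. Unset Printing Implicit Defensive.
Import Order.TTheory GRing.Theory Num.Theory.

(* An element of N^{n+1} is represented as a pair (a, d) with a : 'I_n -> nat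
   (the coordinates a_1..a_n) and d : nat. *)

Definition inM (n : nat) (lam : 'I_n -> nat) (a : 'I_n -> nat) (d : nat) : Prop :=
  ((d%:R : rat) <= \sum_(i < n) ((a i)%:R / (lam i)%:R))%R.

Definition is_zero_elt (n : nat) (a : 'I_n -> nat) (d : nat) : Prop :=
  (forall i, a i = 0%N) /\ d = 0%N.

Definition minimal_generator (n : nat) (lam : 'I_n -> nat) (a : 'I_n -> nat) (d : nat) : Prop :=
  inM lam a d /\ ~ is_zero_elt a d /\
  ~ (exists (b c : 'I_n -> nat) (e f : nat),
        inM lam b e /\ inM lam c f /\ ~ is_zero_elt b e /\ ~ is_zero_elt c f /\
        (forall i, a i = (b i + c i)%N) /\ d = (e + f)%N).

(* Main.v *)
Require Import Defs.
From mathcomp Require Import all_boot all_order all_algebra.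
Import Order.TTheory GRing.Theory Num.Theory.

Theorem corollary5p5 (n : nat) (lam : 'I_n -> nat) (a : 'I_n -> nat) (d : nat) :
  (2 <= n)%N -> (forall i, (0 < lam i)%N) ->
  minimal_generator lam a d -> (d < n)%N.
Proof.
move=> n2 lam0 [inA [nz nodec]].
rewrite ltnNge; apply/negP => nd.
have [j ja] : exists j, (lam j <= a j)%N.
  case: (boolP [exists j, lam j <= a j]) => [/existsP //|/existsPn H]; exfalso.
  move: inA; rewrite /inM => H1.
  have : (\sum_(i < n) ((a i)%:R / (lam i)%:R) < \sum_(i < n) (1 : rat))%R.
    apply: ltr_sum.
      apply/hasP; have i0 : 'I_n by exists 0%N; apply: leq_trans n2.
      by exists i0; rewrite ?mem_index_enum.
    move=> i _; rewrite ltr_pdivrMr ?ltr0n ?lam0 // mul1r ltr_nat.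
    by rewrite ltnNge; apply: H.
  rewrite sumr_const card_ord => H2.
  have : ((d%:R : rat) < n%:R)%R by apply: le_lt_trans H1 _; rewrite -[X in (_ < X)%R]mulr_natr mul1r.
  by rewrite ltr_nat ltnNge nd.
pose b := fun i : 'I_n => if i == j then lam j else 0%N.
have hb : forall i, (b i <= a i)%N by move=> i; rewrite /b; case: eqP => [->|].
have sb : (\sum_(i < n) ((b i)%:R / (lam i)%:R) = (1 : rat))%R.
  rewrite (bigD1 j) //= big1 ?addr0.
    by rewrite /b eqxx mulfV // pnatr_eq0 -lt0n lam0.
  by move=> i /negbTE hi; rewrite /b hi mul0r.
apply: nodec; exists b, (fun i => a i - b i)%N, 1%N, d.-1; split; last split; last split; last split; last split.
- by rewrite /inM sb.
- rewrite /inM.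
  have -> : (\sum_(i < n) ((a i - b i)%N%:R / (lam i)%:R) =
     \sum_(i < n) ((a i)%:R / (lam i)%:R) - \sum_(i < n) ((b i)%:R / (lam i)%:R) :> rat)%R.
    rewrite -sumrB; apply: eq_bigr => i _; by rewrite natrB // mulrBl.
  have d0 : (0 < d)%N by apply: leq_trans nd; apply: leq_trans n2.
  by rewrite sb lerBrDr natr1 prednK.
- by move=> [_ H].
- move=> [_ H]; have : (1 < d)%N by apply: leq_trans nd.
  by case: d {nd inA nz} H => // [[]].
- by move=> i; rewrite subnKC.
- have d0 : (0 < d)%N by apply: leq_trans nd; apply: leq_trans n2.
  by rewrite add1n prednK.
Qed.
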